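(* Let $p$ be a prime with $p\equiv 1$ or $6\pmod 7$ and $p\ne 13$. Define $\phi_2,\phi_3\in\overline{\mathbb{F}}_p[t]$ by: if $p\equiv6\pmod7$, $\phi_2=f\big(\tfrac{2p-5}{7},\tfrac{2p-5}{7},\tfrac{p-6}{7}\big)$ and $\phi_3=f\big(\tfrac{3p-4}{7},\tfrac{3p-4}{7},\tfrac{5p-2}{7}\big)$; if $p\equiv1\pmod7$, $\phi_2=f\big(\tfrac{2p-2}{7},\tfrac{2p-2}{7},\tfrac{p-1}{7}\big)$ and $\phi_3=f\big(\tfrac{3p-3}{7},\tfrac{3p-3}{7},\tfrac{5p-5}{7}\big)$. Then there exists $\alpha\in\overline{\mathbb{F}}_p\setminus\{0,1\}$ with $\phi_2(\alpha)=0$ and $\phi_3(\alpha)\ne0$, and there exists $\alpha'\in\overline{\mathbb{F}}_p\setminus\{0,1\}$ with $\phi_2(\alpha')\ne0$ and $\phi_3(\alpha')=0$.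
   Context: For non-negative integers $a,b,c$, $f(a,b,c)\in\overline{\mathbb{F}}_p[t]$ is $f(a,b,c)=\sum_{i_2+i_3=c}\binom{a}{i_2}\binom{b}{i_3}t^{i_2}$ (binomial coefficients reduced mod $p$, $\binom{n}{i}=0$ for $i<0$ or $i>n$). (These $\phi_2,\phi_3$ are the Hasse–Witt entries of the family of curves $y^7=x^3(x-t)(x-1)^2\cdots$ with monodromy $(7,4,(3,1,1,2))$ at the characters $\zeta_7^2,\zeta_7^3$, but the claim concerns only the explicit polynomials.) *)

(* Defs.v *)
From HB Require Import structures.
From mathcomp Require Import all_boot all_order all_algebra.
Set Implicit Arguments. Unset Strict Implicit. Unset Printing Implicit Defensive.
Import GRing.Theory.
Local Open Scope ring_scope.

(* f(a,b,c) = sum_{i2+i3=c} C(a,i2) C(b,i3) t^{i2}, coefficients reduced in K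
   (the nat-cast %:R reduces mod p when K has characteristic p).
   'C(n,k) = 0 for k > n, matching the paper's convention. *)
Definition fpoly (K : nzRingType) (a b c : nat) : {poly K} :=
  \sum_(i < c.+1) ('C(a, i) * 'C(b, c - i))%:R *: 'X^i.

(* phi_2 and phi_3 depending on p mod 7 (p = 6 mod 7 or p = 1 mod 7).
   The divisions below are exact in the relevant cases. *)
Definition phi2 (K : nzRingType) (p : nat) : {poly K} :=
  if (p %% 7 == 6)%N
  then fpoly K ((2 * p - 5) %/ 7) ((2 * p - 5) %/ 7) ((p - 6) %/ 7)
  else fpoly K ((2 * p - 2) %/ 7) ((2 * p - 2) %/ 7) ((p - 1) %/ 7).

Definition phi3 (K : nzRingType) (p : nat) : {poly K} :=
  if (p %% 7 == 6)%N
  then fpoly K ((3 * p - 4) %/ 7) ((3 * p - 4) %/ 7) ((5 * p - 2) %/ 7)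
  else fpoly K ((3 * p - 3) %/ 7) ((3 * p - 3) %/ 7) ((5 * p - 5) %/ 7).

(* Main.v *)
Require Import Defs.
From HB Require Import structures.
From mathcomp Require Import all_boot all_order all_algebra.
From mathcomp Require Import zify ring.
Set Implicit Arguments. Unset Strict Implicit. Unset Printing Implicit Defensive.
Import GRing.Theory.
Local Open Scope ring_scope.

Lemma fact_ndvd p m : prime p -> (m < p)%N -> ~~ (p %| m`!)%N.
Proof.
move=> pp; elim: m => [|m IH] lt; first by rewrite fact0 dvdn1; apply/eqP => e; move: (prime_gt1 pp); rewrite e.
rewrite factS Euclid_dvdM // negb_or IH ?(ltnW lt) // andbT.
by rewrite gtnNdvd.
Qed.

Lemma bin_ndvd p m j : prime p -> (m < p)%N -> (j <= m)%N -> ~~ (p %| 'C(m, j))%N.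
Proof.
move=> pp lt le; apply/negP => d; move: (fact_ndvd pp lt).
by rewrite -(bin_fact le) (dvdn_mulr _ d).
Qed.

Lemma natr_neq0 (K : nzRingType) p m : p \in [pchar K] -> ~~ (p %| m)%N -> m%:R != 0 :> K.
Proof. by move=> ch; rewrite (dvdn_pcharf ch). Qed.

Lemma coef_fpoly (K : nzRingType) n m c i :
  (fpoly K n m c)`_i = if (i < c.+1)%N then ('C(n, i) * 'C(m, c - i))%:R else 0.
Proof. by rewrite /fpoly -(poly_def c.+1 (fun i => ('C(n, i) * 'C(m, c - i))%:R)) coef_poly. Qed.

Lemma fpoly_shift (K : nzRingType) n c : (n <= c <= n + n)%N ->
  fpoly K n n c = 'X^(c - n) * fpoly K n n (n + n - c).
Proof.
move=> /andP[h1 h2]; apply/polyP => i; rewrite coefXnM !coef_fpoly.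
case: (ltnP i (c - n)) => h3.
  rewrite ifT; last by lia.
  by rewrite (bin_small (n := n) (m := c - i)) ?muln0 //; lia.
case: (ltnP n i) => h4.
  rewrite [RHS]ifF; last by lia.
  case: ifP => // _; by rewrite bin_small ?mul0n.
rewrite ifT; last by lia.
rewrite ifT; last by lia.
have -> : (i - (c - n) = n - (c - i))%N by lia.
have -> : (n + n - c - (n - (c - i)) = n - i)%N by lia.
rewrite bin_sub ?bin_sub; [by rewrite mulnC| lia | lia].
Qed.

Lemma fpolyE (K : nzRingType) n m c :
  fpoly K n m c = \poly_(i < c.+1) ('C(n, i) * 'C(m, c - i))%:R.
Proof. by rewrite /fpoly -(poly_def c.+1 (fun i => ('C(n, i) * 'C(m, c - i))%:R)). Qed.

Lemma fpoly0 (K : nzRingType) n m c : (fpoly K n m c).[0] = ('C(m, c))%:R.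
Proof. by rewrite horner_coef0 coef_fpoly bin0 mul1n subn0. Qed.

Lemma fpoly1 (K : nzRingType) n m c : (fpoly K n m c).[1] = ('C(n + m, c))%:R.
Proof.
rewrite /fpoly horner_sum -binomial.Vandermonde natr_sum; apply: eq_bigr => i _.
by rewrite hornerZ hornerXn expr1n mulr1.
Qed.

Lemma size_fpoly (K : nzRingType) n m c : ('C(n, c))%:R != 0 :> K ->
  size (fpoly K n m c) = c.+1.
Proof. by move=> h; rewrite fpolyE size_poly_eq //= subnn bin0 muln1. Qed.


Section Ode.
Variables (n k : nat).
Hypothesis kn : (k <= n)%N.
Let A j := if (j < k.+1)%N then ('C(n, j) * 'C(n, k - j))%N else 0%N.

Lemma recA j : (A j.+1 * j.+1 * (j + (n - k).+1) = A j * ((n - j) * (k - j)))%N.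
Proof.
rewrite /A; case: (ltnP j k) => h.
  rewrite ifT // ifT; last by lia.
  have e1 := mul_bin_left n j.
  have e2 := mul_bin_left n (k - j.+1).
  rewrite (_ : (k - j.+1).+1 = k - j)%N in e2; last by lia.
  rewrite (_ : (n - (k - j.+1)) = j + (n - k).+1)%N in e2; last by lia.
  transitivity ((j.+1 * 'C(n,j.+1)) * ((j + (n-k).+1) * 'C(n, k - j.+1)))%N; first ring.
  rewrite e1 -e2; ring.
rewrite ifF; last by lia.
by rewrite (_ : k - j = 0)%N ?muln0 //; lia.
Qed.

Lemma keyA j : (A j.+1 * j.+1 * j + (n - k).+1 * (A j.+1 * j.+1) + (n + k).-1 * (A j * j)
   = A j * j * j.-1 + n * k * A j)%N.
Proof.
have r := recA j.
case: (ltnP j k) => h.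
  have -> : (A j.+1 * j.+1 * j + (n - k).+1 * (A j.+1 * j.+1) = A j.+1 * j.+1 * (j + (n - k).+1))%N by ring.
  rewrite r.
  have e : ((n - j) * (k - j) + (n + k).-1 * j = j * j.-1 + n * k)%N.
    have [d hd] : exists d, k = (j + d.+1)%N by exists (k - j.+1)%N; lia.
    have [e he] : exists e, n = (k + e)%N by exists (n - k)%N; lia.
    rewrite he hd.
    have -> : (j + d.+1 + e - j = d.+1 + e)%N by lia.
    have -> : (j + d.+1 - j = d.+1)%N by lia.
    have -> : ((j + d.+1 + e + (j + d.+1)).-1 = j + d + e + (j + d.+1))%N by lia.
    case: (j) => [|j'] /=; ring.
  transitivity (A j * ((n - j) * (k - j) + (n + k).-1 * j))%N; first ring.
  by rewrite e; ring.
have -> : A j.+1 = 0%N by rewrite /A ifF //; apply/negbTE; rewrite -leqNgt; lia.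
case: (ltnP k j) => h2.
  have -> : A j = 0%N by rewrite /A ifF //; apply/negbTE; rewrite -leqNgt; lia.
  by rewrite !mul0n !muln0.
have -> : j = k by lia.
case: k {h h2 r} => [|k'] /=; first by rewrite !muln0.
rewrite addnS /=; ring.
Qed.

Lemma coefA (K : nzRingType) j : (fpoly K n n k)`_j = (A j)%:R.
Proof. by rewrite coef_fpoly /A; case: ifP. Qed.

Ltac close_with H := apply/eqP; rewrite -subr_eq0;
  match goal with |- is_true (?g == 0) => match type of H with ?a = ?b =>
    have -> : g = a - b by ring end end; by rewrite H subrr.

Lemma fpoly_ode (K : comNzRingType) :
  let F := fpoly K n n k in
  'X * F^`()^`() + ((n - k).+1)%:R *: F^`() + ((n + k).-1)%:R *: ('X * F^`()) =
  'X * ('X * F^`()^`()) + (n * k)%:R *: F.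
Proof.
move=> F; apply/polyP => j.
rewrite !coefD !coefZ !coefXM !coef_deriv /F.
case: j => [|[|j]]; rewrite ?eqxx.
- rewrite !coefA.
  have H := congr1 (GRing.natmul (1 : K)) (keyA 0); move: H.
  move: (A 1) (A 0) => a1 a0 H; close_with H.
- rewrite (_ : (1 == 0)%N = false) // !coefA.
  have H := congr1 (GRing.natmul (1 : K)) (keyA 1); move: H.
  move: (A 2) (A 1) => a2 a1 H; rewrite -[1.-1]/0%N in H *; close_with H.
- rewrite (_ : (j.+2 == 0)%N = false) // (_ : (j.+2.-1 == 0)%N = false) // !coefA.
  have H := congr1 (GRing.natmul (1 : K)) (keyA j.+2); move: H.
  move: (A j.+3) (A j.+2) => a3 a2 H; rewrite -[j.+2.-1]/j.+1 -[j.+2.-2]/j in H *; close_with H.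
Qed.
End Ode.

Lemma deriv_fac (K : comNzRingType) (z : K) (Q : {poly K}) m :
  exists Q1, (Q * ('X - z%:P) ^+ m.+1)^`() = Q1 * ('X - z%:P) ^+ m /\
             Q1.[z] = Q.[z] *+ m.+1.
Proof.
exists (Q^`() * ('X - z%:P) + Q *+ m.+1); split.
  rewrite derivM deriv_exp derivXsubC /= mul1r exprS; ring.
by rewrite hornerD hornerMn !hornerE subrr mulr0 add0r.
Qed.

Lemma no_double (K : fieldType) (F : {poly K}) (c0 c1 e z : K) :
  F != 0 ->
  'X * F^`()^`() + c0 *: F^`() + c1 *: ('X * F^`()) = 'X * ('X * F^`()^`()) + e *: F ->
  z != 0 -> z != 1 -> (forall m, (0 < m < size F)%N -> m%:R != 0 :> K) ->
  ~~ (('X - z%:P) ^+ 2 %| F).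
Proof.
move=> F0 ode z0 z1 hn; apply/negP => d.
have [E hE] : exists E, E = 'X - z%:P by eexists.
rewrite -hE in d.
have E0 : E != 0 by rewrite hE polyXsubC_eq0.
have Ez : E.[z] = 0 by rewrite hE !hornerE subrr.
have step j : (j.+2 < size F)%N -> E ^+ j.+2 %| F -> E ^+ j.+3 %| F.
  move=> hj /dvdpP[Q hQ].
  have [Q1 [d1 e1]] := deriv_fac z Q j.+1.
  have [Q2 [d2 e2]] := deriv_fac z Q1 j.
  rewrite -hE in d1 d2.
  rewrite hQ d1 d2 in ode.
  have H : E ^+ j * ('X * Q2 + c0%:P * Q1 * E + c1%:P * ('X * Q1 * E) - 'X * ('X * Q2) - e%:P * Q * E * E) = 0.
    move: ode; rewrite -!mul_polyC !exprS => ode.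
    apply/eqP; rewrite -subr_eq0.
    match goal with |- is_true (?g == 0) => match type of ode with ?a = ?b =>
      have -> : g = a - b by ring end end.
    by rewrite ode subrr.
  move/eqP: H; rewrite mulf_eq0 expf_eq0 (negbTE E0) andbF /= => /eqP H.
  have Hz := congr1 (fun p => p.[z]) H; rewrite /= !(hornerD, hornerN, hornerM, hornerX, hornerC) Ez in Hz.
  have H2 : z * (1 - z) * Q2.[z] = 0.
    rewrite -Hz; ring.
  move/eqP: H2; rewrite !mulf_eq0 (negbTE z0) subr_eq0 eq_sym (negbTE z1) /= => /eqP H2.
  have H3 : Q.[z] * ((j.+2 * j.+1)%N%:R) = 0 by rewrite mulr_natr mulrnA -e1 -e2.
  move/eqP: H3; rewrite mulf_eq0 natrM mulf_eq0 => /orP[rq|/orP[] h0].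
  2: by move: (hn j.+2 ltac:(lia)); rewrite h0.
  2: by move: (hn j.+1 ltac:(lia)); rewrite h0.
  have /dvdpP[q hq] : E %| Q by rewrite hE dvdp_XsubCl /root rq.
  by apply/dvdpP; exists q; rewrite hQ hq -mulrA -exprS.
have sF : (3 <= size F)%N.
  by rewrite (leq_trans _ (dvdp_leq F0 d)) // hE size_exp_XsubC.
have all j : (j <= size F - 3)%N -> E ^+ j.+2 %| F.
  elim: j => [|j IH] hj; first exact: d.
  apply: step; first by lia.
  by apply: IH; lia.
have h1 := all (size F - 3)%N (leqnn _).
have h2 := step (size F - 3)%N ltac:(lia) h1.
rewrite (_ : (size F - 3).+3 = size F)%N in h2; last by lia.
by have := dvdp_leq F0 h2; rewrite hE size_exp_XsubC ltnn.
Qed.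

Lemma uniq_sqfree (K : fieldType) (rs : seq K) :
  (forall z, ~~ (('X - z%:P) ^+ 2 %| \prod_(a <- rs) ('X - a%:P))) -> uniq rs.
Proof.
elim: rs => [//|a rs IH] h /=; apply/andP; split.
  apply/negP => ain; move: (h a); rewrite big_cons expr2 dvdp_mul //.
  by rewrite dvdp_XsubCl root_prod_XsubC.
apply: IH => z; apply/negP => d; move: (h z).
by rewrite big_cons dvdp_mull.
Qed.

Lemma exists_sep (K : closedFieldType) (F1 F2 : {poly K}) :
  F2 != 0 -> size F1 = size F2 -> (1 < size F1)%N ->
  (forall z, ~~ (('X - z%:P) ^+ 2 %| F1)) -> ~~ (F1 %= F2) ->
  exists z, root F1 z && ~~ root F2 z.
Proof.
move=> F20 sz s1 sq neq.
have F10 : F1 != 0 by rewrite -size_poly_eq0; lia.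
have lc0 : lead_coef F1 != 0 by rewrite lead_coef_eq0.
have [rs hrs] := closed_field_poly_normal F1.
case: (boolP (has (fun z => ~~ root F2 z) rs)) => [/hasP[z zin nz]|/hasPn h].
  by exists z; rewrite nz andbT hrs rootZ // root_prod_XsubC.
have allr : all (root F2) rs by apply/allP => z zin; have := h z zin; rewrite negbK.
have urs : uniq rs.
  apply: uniq_sqfree => z; apply/negP => d; move: (sq z).
  by rewrite hrs dvdpZr // d.
have urs2 : uniq_roots rs by rewrite uniq_rootsE.
have [q hq] := uniq_roots_prod_XsubC allr urs2.
have dv : F1 %| F2 by rewrite {1}hrs dvdpZl // hq dvdp_mulIr.
by move: neq; rewrite -(dvdp_size_eqp dv) sz eqxx.
Qed.

Lemma not_eqp (K : fieldType) p n1 n2 k : prime p -> p \in [pchar K] ->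
  (2 <= k)%N -> (k <= n1)%N -> (n1 < n2)%N -> (n2 < p)%N ->
  ~~ (fpoly K n1 n1 k %= fpoly K n2 n2 k).
Proof.
move=> pp ch k2 kn1 n12 n2p; apply/negP => /eqp_eq E.
have nz m : (0 < m < p)%N -> m%:R != 0 :> K.
  by move=> /andP[h1 h2]; apply: (natr_neq0 ch); rewrite gtnNdvd.
have nzb m j : (j <= m)%N -> (m < p)%N -> ('C(m, j))%:R != 0 :> K.
  by move=> h1 h2; apply: (natr_neq0 ch); apply: bin_ndvd.
have F1nz : fpoly K n1 n1 k != 0.
  apply/negP => /eqP h; have := congr1 (fun q : {poly K} => q`_0) h.
  by rewrite /= coef_fpoly coef0 ltn0Sn bin0 mul1n subn0; apply/eqP/nzb; lia.
have l1 : lead_coef (fpoly K n1 n1 k) != 0 by rewrite lead_coef_eq0.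
have c0 := congr1 (fun q : {poly K} => q`_0) E; have c1 := congr1 (fun q : {poly K} => q`_1) E.
rewrite /= !coefZ !coef_fpoly ltn0Sn ltnS (ltnW k2) !bin0 !bin1 !mul1n !subn0 !natrM in c0 c1.
move: l1 c0 c1; move: (lead_coef (fpoly K n1 n1 k)) (lead_coef (fpoly K n2 n2 k)) => L1 L2 l1 c0 c1.
have cross : 'C(n1, k)%:R * (n2%:R * 'C(n2, k - 1)%:R) = n1%:R * 'C(n1, k - 1)%:R * 'C(n2, k)%:R :> K.
  apply: (mulfI l1); apply/eqP; rewrite -subr_eq0.
  match goal with |- is_true (?g == 0) => match type of c0 with ?a0 = ?b0 =>
    match type of c1 with ?a1 = ?b1 =>
    have -> : g = 'C(n1, k)%:R * (b1 - a1) - n1%:R * 'C(n1, k - 1)%:R * (b0 - a0) by ring end end end.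
  by rewrite c0 c1; apply/eqP; ring.
have fab m : (k <= m)%N -> (k%:R * 'C(m, k)%:R = (m%:R - k%:R + 1) * 'C(m, k - 1)%:R :> K).
  move=> km; have := mul_bin_left m (k - 1).
  rewrite (_ : (k - 1).+1 = k)%N; last by lia.
  rewrite (_ : m - (k - 1) = (m - k) + 1)%N; last by lia.
  move/(congr1 (GRing.natmul (1 : K))); rewrite !natrM natrD natrB //.
have fa := fab n1 kn1; have fb := fab n2 ltac:(lia).
have G : 'C(n1, k)%:R * 'C(n2, k)%:R * k%:R * ((n2%:R - n1%:R) * (k%:R - 1)) = 0 :> K.
  apply/eqP; rewrite -subr_eq0.
  match goal with |- is_true (?g == 0) => match type of cross with ?ac = ?bc =>
    match type of fa with ?afa = ?bfa => match type of fb with ?afb = ?bfb =>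
    have -> : g = - ((n1%:R - k%:R + 1) * (n2%:R - k%:R + 1)) * (ac - bc)
      + 'C(n1, k)%:R * n2%:R * (n1%:R - k%:R + 1) * (bfb - afb)
      - n1%:R * 'C(n2, k)%:R * (n2%:R - k%:R + 1) * (bfa - afa) by ring end end end end.
  by rewrite cross fa fb; apply/eqP; ring.
move/eqP: G; rewrite -natrB ?(ltnW n12) // (_ : k%:R - 1 = (k - 1)%:R :> K); last first.
  by rewrite natrB // ltnW.
rewrite !mulf_eq0 (negbTE (nzb _ _ _ _)) ?(negbTE (nzb _ _ _ _)) ?(negbTE (nz _ _)) //; lia.
Qed.

Lemma Gprops (K : closedFieldType) p n k : prime p -> p \in [pchar K] ->
  (1 <= k <= n)%N -> (n + n < p)%N ->
  [/\ (fpoly K n n k).[0] != 0, (fpoly K n n k).[1] != 0, size (fpoly K n n k) = k.+1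
    & forall z, ~~ (('X - z%:P) ^+ 2 %| fpoly K n n k)].
Proof.
move=> pp ch /andP[k1 kn] np.
have nzb m j : (j <= m)%N -> (m < p)%N -> ('C(m, j))%:R != 0 :> K.
  by move=> h1 h2; apply: (natr_neq0 ch); apply: bin_ndvd.
have h0 : (fpoly K n n k).[0] != 0 by rewrite fpoly0 nzb //; lia.
have h1 : (fpoly K n n k).[1] != 0 by rewrite fpoly1 nzb //; lia.
have sz : size (fpoly K n n k) = k.+1 by rewrite size_fpoly // nzb //; lia.
split=> // z; apply/negP => d.
have rz : root (fpoly K n n k) z.
  rewrite -dvdp_XsubCl; apply: dvdp_trans d; by rewrite expr2 dvdp_mulIl.
have z0 : z != 0 by apply/negP => /eqP e; move: rz; rewrite e /root (negbTE h0).
have z1 : z != 1 by apply/negP => /eqP e; move: rz; rewrite e /root (negbTE h1).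
have F0 : fpoly K n n k != 0 by rewrite -size_poly_eq0 sz.
move: d; apply/negP; apply: (no_double F0 (@fpoly_ode n k kn K) z0 z1).
move=> m; rewrite sz => hm; apply: (natr_neq0 ch); rewrite gtnNdvd //; lia.
Qed.

Lemma core (K : closedFieldType) p n1 n2 k s (P2 P3 : {poly K}) :
  prime p -> p \in [pchar K] -> (2 <= k)%N -> (k <= n1)%N -> (n1 < n2)%N ->
  (n2 + n2 < p)%N -> P2 = fpoly K n1 n1 k -> P3 = 'X^s * fpoly K n2 n2 k ->
  (exists a : K, [/\ a != 0, a != 1, P2.[a] = 0 & P3.[a] != 0]) /\
  (exists a : K, [/\ a != 0, a != 1, P2.[a] != 0 & P3.[a] = 0]).
Proof.
move=> pp ch k2 kn1 n12 np -> ->.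
have [a0 a1 asz asq] := Gprops pp ch (ltac:(lia) : (1 <= k <= n1)%N) ltac:(lia).
have [b0 b1 bsz bsq] := Gprops pp ch (ltac:(lia) : (1 <= k <= n2)%N) np.
have A0 : fpoly K n1 n1 k != 0 by rewrite -size_poly_eq0 asz.
have B0 : fpoly K n2 n2 k != 0 by rewrite -size_poly_eq0 bsz.
have ne : ~~ (fpoly K n1 n1 k %= fpoly K n2 n2 k).
  apply: (not_eqp pp ch) => //; lia.
have ev z : ('X^s * fpoly K n2 n2 k).[z] = z ^+ s * (fpoly K n2 n2 k).[z].
  by rewrite hornerM hornerXn.
split.
  have [z /andP[r1 r2]] := exists_sep B0 (etrans asz (esym bsz)) ltac:(rewrite asz; lia) asq ne.
  exists z; split.
  - by apply/negP => /eqP e; move: r1; rewrite e /root (negbTE a0).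
  - by apply/negP => /eqP e; move: r1; rewrite e /root (negbTE a1).
  - exact/eqP.
  rewrite ev mulf_neq0 // expf_neq0 //.
  by apply/negP => /eqP e; move: r1; rewrite e /root (negbTE a0).
have [z /andP[r1 r2]] := exists_sep A0 (etrans bsz (esym asz)) ltac:(rewrite bsz; lia) bsq
  ltac:(by rewrite eqp_sym).
exists z; split.
- by apply/negP => /eqP e; move: r1; rewrite e /root (negbTE b0).
- by apply/negP => /eqP e; move: r1; rewrite e /root (negbTE b1).
- exact: r2.
by rewrite ev (eqP r1) mulr0.
Qed.

Theorem lemma5p3 (p : nat) (K : closedFieldType) :
  prime p -> p \in [pchar K] ->
  (p %% 7 = 1 \/ p %% 7 = 6)%N -> p <> 13%N ->
  (exists a : K, [/\ a != 0, a != 1, (phi2 K p).[a] = 0 & (phi3 K p).[a] != 0]) /\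
  (exists a : K, [/\ a != 0, a != 1, (phi2 K p).[a] != 0 & (phi3 K p).[a] = 0]).
Proof.
move=> pp ch hm p13.
have hp := divn_eq p 7.
set q := (p %/ 7)%N in hp.
rewrite /phi2 /phi3.
case: hm => hm.
  rewrite hm /= in hp *.
  have q2 : (2 <= q)%N.
    case: q hp => [|[|q']] hp; first by rewrite hp in pp.
      by rewrite hp in pp.
    lia.
  rewrite (_ : (2 * p - 2) %/ 7 = 2 * q)%N; last by lia.
  rewrite (_ : (p - 1) %/ 7 = q)%N; last by lia.
  rewrite (_ : (3 * p - 3) %/ 7 = 3 * q)%N; last by lia.
  rewrite (_ : (5 * p - 5) %/ 7 = 5 * q)%N; last by lia.
  rewrite (@fpoly_shift _ (3 * q) (5 * q)); last by lia.
  rewrite (_ : (3 * q + 3 * q - 5 * q) = q)%N; last by lia.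
  by apply: (@core K p (2 * q) (3 * q) q (5 * q - 3 * q)) => //; lia.
rewrite hm /= in hp *.
have q2 : (2 <= q)%N.
  case: q hp => [|[|q']] hp; first by rewrite hp in pp.
    by rewrite hp in p13.
  lia.
rewrite (_ : (2 * p - 5) %/ 7 = 2 * q + 1)%N; last by lia.
rewrite (_ : (p - 6) %/ 7 = q)%N; last by lia.
rewrite (_ : (3 * p - 4) %/ 7 = 3 * q + 2)%N; last by lia.
rewrite (_ : (5 * p - 2) %/ 7 = 5 * q + 4)%N; last by lia.
rewrite (@fpoly_shift _ (3 * q + 2) (5 * q + 4)); last by lia.
rewrite (_ : (3 * q + 2 + (3 * q + 2) - (5 * q + 4)) = q)%N; last by lia.
by apply: (@core K p (2 * q + 1) (3 * q + 2) q (5 * q + 4 - (3 * q + 2))) => //; lia.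
Qed.
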